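(* Let $\theta=\tilde p/p$ be a rational inner function on $\mathbb{D}^2$ of degree $(1,1)$ with $p(z)=a+bz_1+cz_2+dz_1z_2$, and assume $p$ vanishes at $\tau=(\tau_1,\tau_2)\in\mathbb{T}^2$. Let $\lambda$ satisfy $\lambda^2=\bar ac-d\bar b$ and let $f(z)=\frac{\lambda(z_2-\tau_2)}{p(z)}$. Then \[(M_{z_1}^*f)(z)=f(z)\Big(-\frac{b+dz_2}{a+cz_2}\Big),\qquad (M_{z_1}^*\theta)(z)=f(z)\,\lambda\Big(\frac{z_2-\tau_2}{a+cz_2}\Big).\]
   Context: $\mathbb{D}$ is the open unit disk, $\mathbb{T}$ the unit circle. A rational inner function of degree $(1,1)$ can be written $\theta=\tilde p/p$ with $p$ a polynomial of degree at most one in each variable with no zeros on $\mathbb{D}^2$ and $\tilde p(z)=\bar az_1z_2+\bar bz_2+\bar cz_1+\bar d$, $p,\tilde p$ coprime. $M_{z_1}^*$ denotes the adjoint of multiplication by $z_1$ on the Hardy space $H^2(\mathbb{D}^2)$ (the backward shift in $z_1$: $(M_{z_1}^*F)(z)=(F(z)-F(0,z_2))/z_1$). *)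

(* Defs.v *)
From HB Require Import structures.
From mathcomp Require Import all_boot all_order all_algebra.
From mathcomp.real_closed Require Import complex.
From mathcomp Require Import mpoly.
Set Implicit Arguments. Unset Strict Implicit. Unset Printing Implicit Defensive.
Import Order.TTheory GRing.Theory Num.Theory.
Local Open Scope ring_scope.

(* The complex numbers are modelled as R[i] for a real closed field R
   (the genuine complex field is the instance R = reals). *)

(* p(z) = a + b z1 + c z2 + d z1 z2, as a polynomial in C[z1,z2]
   ('X_0 = z1, 'X_1 = z2). *)
Definition pol11 (C : comNzRingType) (a b c d : C) : {mpoly C[2]} :=
  a%:MP + b *: 'X_0 + c *: 'X_1 + d *: ('X_0 * 'X_1).

Definition ev11 (C : comNzRingType) (a b c d z1 z2 : C) : C :=
  a + b * z1 + c * z2 + d * z1 * z2.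

Definition ptil11 (R : rcfType) (a b c d : R[i]) : {mpoly R[i][2]} :=
  pol11 (conjc d) (conjc c) (conjc b) (conjc a).

Definition mcoprime (C : comNzRingType) (p q : {mpoly C[2]}) : Prop :=
  forall g r s : {mpoly C[2]}, p = g * r -> q = g * s -> (msize g <= 1)%N.

Definition inD (R : rcfType) (z : R[i]) : Prop := `|z| < 1.
Definition inT (R : rcfType) (z : R[i]) : Prop := `|z| = 1.

(* adjoint of multiplication by z1 on H^2(D^2) (backward shift in z1):
   (M_{z1}^* F)(z) = (F(z) - F(0, z2)) / z1, as in the paper (for z1 <> 0). *)
Definition bshift1 (C : fieldType) (F : C -> C -> C) (z1 z2 : C) : C :=
  (F z1 z2 - F 0 z2) / z1.

(* Main.v *)
Require Import Defs.
From HB Require Import structures.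
From mathcomp Require Import all_boot all_order all_algebra.
From mathcomp.real_closed Require Import complex.
From mathcomp Require Import mpoly.
From mathcomp Require Import ring lra.
Import Order.TTheory GRing.Theory Num.Theory.
Local Open Scope ring_scope.

Section S.
Variable R : rcfType.
Local Open Scope complex_scope.
Local Open Scope ring_scope.
Definition nr (z : R[i]) : R := let: Complex x y := z in x ^+ 2 + y ^+ 2.
Definition dt (z w : R[i]) : R :=
  let: Complex x y := z in let: Complex p q := w in x * p + y * q.
Lemma nrC (z : R[i]) : (nr z)%:C = z * conjc z.
Proof. case: z => x y; rewrite /nr /=. apply/eqP; rewrite eq_complex /=; apply/andP; split; apply/eqP; ring. Qed.
Lemma nrM (x y : R[i]) : nr (x * y) = nr x * nr y.
Proof. case: x => a b; case: y => c d; rewrite /nr /=. ring. Qed.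
Lemma nr_ge0 z : 0 <= nr z.
Proof. case: z => x y; rewrite /nr; nra. Qed.
Lemma nr0 : nr 0 = 0.
Proof. by rewrite /nr /= expr0n /= addr0. Qed.
Lemma nrN x : nr (- x) = nr x.
Proof. case: x => a b; rewrite /nr /=; ring. Qed.
Lemma nr_eq0 x : (nr x == 0) = (x == 0).
Proof.
apply/idP/idP => [/eqP h|/eqP ->]; last by rewrite nr0.
have : x * conjc x = 0 by rewrite -nrC h.
by move/eqP; rewrite mulf_eq0 conjc_eq0 orbb.
Qed.
Lemma nrV x : x != 0 -> nr x^-1 = (nr x)^-1.
Proof.
move=> hx; have := nrM x x^-1; rewrite mulfV // => h.
have h1 : nr 1 = 1 by rewrite /nr /= expr0n /= addr0 expr1n.
have hn : nr x != 0 by rewrite nr_eq0.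
apply: (mulfI hn); rewrite -nrM mulfV // ?nr_eq0 // mulfV //.
Qed.
Lemma normc_lt1 (z : R[i]) : (`|z| < 1) = (nr z < 1).
Proof.
rewrite normc_def; case: z => x y /=.
rewrite -[1 : R[i]]/(1%:C) ltcR -{1}sqrtr1 ltr_sqrt //.
Qed.
Lemma normc_eq1 (z : R[i]) : `|z| = 1 -> nr z = 1.
Proof.
rewrite normc_def; case: z => x y /= [] h.
have := sqr_sqrtr (nr_ge0 (x +i* y)); rewrite /= h expr1n => <- //.
Qed.
Lemma nrD x y t : nr (x + t%:C * y) = nr x + 2 * t * dt x y + t ^+ 2 * nr y.
Proof. case: x => a b; case: y => c d; rewrite /nr /dt /=. ring. Qed.
Lemma nrR t : nr t%:C = t ^+ 2.
Proof. rewrite /nr /=. ring. Qed.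

Lemma step1 (a b c d w : R[i]) :
  (forall z1 z2 : R[i], inD z1 -> inD z2 -> ev11 a b c d z1 z2 != 0) ->
  nr w < 1 -> nr (b + d * w) <= nr (a + c * w).
Proof.
move=> H hw; rewrite leNgt; apply/negP => hlt.
have hM : b + d * w != 0.
  by apply/eqP => M0; move: hlt; rewrite M0 nr0 ltNge nr_ge0.
have hMp : 0 < nr (b + d * w) by apply: le_lt_trans hlt; apply: nr_ge0.
have := H (- (a + c * w) / (b + d * w)) w.
rewrite /inD !normc_lt1 nrM nrN nrV // ltr_pdivrMr // mul1r => /(_ hlt hw).
have -> : ev11 a b c d (- (a + c * w) / (b + d * w)) w =
   (a + c * w) + (- (a + c * w) / (b + d * w)) * (b + d * w) by rewrite /ev11; ring.
by rewrite divfK // subrr eqxx.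
Qed.

Lemma cont (al be ga : R) :
  (forall t, 0 <= t -> t < 1 -> 0 <= al + be * t + ga * t ^+ 2) -> 0 <= al + be + ga.
Proof.
move=> H; rewrite leNgt; apply/negP => hneg.
pose e := - (al + be + ga).
have he : 0 < e by rewrite /e; lra.
pose K := `|be| + 2 * `|ga|.
have hK : 0 <= K by rewrite /K; have := normr_ge0 be; have := normr_ge0 ga; lra.
pose s := e / (e + K).
have hs : s * (e + K) = e by rewrite /s divfK //; apply/lt0r_neq0; lra.
have s0 : 0 < s by rewrite /s divr_gt0 //; lra.
have s1 : s <= 1 by rewrite /s ler_pdivrMr; lra.
have := H (1 - s); rewrite subr_ge0 s1 => /(_ isT).
have -> : 1 - s < 1 by lra.
move=> /(_ isT) h.
have hb1 := ler_norm be; have hb2 := ler_normr be; have hg1 := ler_norm ga.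
have hb3 : - be <= `|be| by rewrite -normrN ler_norm.
have hg3 : - ga <= `|ga| by rewrite -normrN ler_norm.
have hg0 := normr_ge0 ga.
have p1 : - be * s <= `|be| * s by apply: ler_wpM2r; lra.
have p2 : ga * (s ^+ 2 - 2 * s) <= `|ga| * (2 * s - s ^+ 2).
  have -> : ga * (s ^+ 2 - 2 * s) = (- ga) * (2 * s - s ^+ 2) by ring.
  apply: ler_wpM2r => //; nra.
have p3 : `|ga| * (2 * s - s ^+ 2) <= 2 * s * `|ga| by nra.
have p4 : 0 < s * e by nra.
have e1 : al + be * (1 - s) + ga * (1 - s) ^+ 2 = - e - be * s + ga * (s ^+ 2 - 2 * s) by rewrite /e; ring.
rewrite e1 in h.
have : s * K = e - s * e by rewrite -{1}hs; ring.
rewrite /K => hsK.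
nra.
Qed.

Lemma step2 (a b c d u : R[i]) :
  (forall w, nr w < 1 -> nr (b + d * w) <= nr (a + c * w)) ->
  nr u = 1 -> nr (b + d * u) <= nr (a + c * u).
Proof.
move=> H hu.
have key : forall t, 0 <= t -> t < 1 ->
  0 <= (nr a - nr b) + (2 * dt a (c * u) - 2 * dt b (d * u)) * t
        + (nr (c * u) - nr (d * u)) * t ^+ 2.
  move=> t t0 t1.
  have := H (t%:C * u); rewrite nrM nrR hu mulr1.
  have -> : t ^+ 2 < 1 by nra.
  move=> /(_ isT).
  have -> : a + c * (t%:C * u) = a + t%:C * (c * u) by ring.
  have -> : b + d * (t%:C * u) = b + t%:C * (d * u) by ring.
  rewrite !nrD => h; nra.
have := @cont _ _ _ key.
have -> : a + c * u = a + 1%:C * (c * u) by rewrite mul1r.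
have -> : b + d * u = b + 1%:C * (d * u) by rewrite mul1r.
rewrite !nrD expr1n; lra.
Qed.

Lemma keyQ (a b c d t1 t2 z : R[i]) :
  (forall z1 z2 : R[i], inD z1 -> inD z2 -> ev11 a b c d z1 z2 != 0) ->
  nr t1 = 1 -> nr t2 = 1 -> ev11 a b c d t1 t2 = 0 ->
  (conjc c + conjc a * z) * (a + c * z) - (conjc d + conjc b * z) * (b + d * z)
  = (conjc a * c - d * conjc b) * (z - t2) ^+ 2.
Proof.
move=> H h1 h2 h0.
have S2 : forall u, nr u = 1 -> nr (b + d * u) <= nr (a + c * u).
  by move=> u hu; apply: step2 hu => w hw; apply: step1.
pose A := a * conjc c - b * conjc d.
pose B := a * conjc a + c * conjc c - b * conjc b - d * conjc d.
pose C := conjc a * c - conjc b * d.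
have F : forall u, nr u = 1 ->
    (nr (a + c * u) - nr (b + d * u))%:C = B + A * conjc u + C * u.
  move=> u hu; have hu' : u * conjc u = 1 by rewrite -nrC hu.
  rewrite rmorphB /= !nrC !rmorphD !rmorphM /=.
  apply/eqP; rewrite -subr_eq0; apply/eqP.
  transitivity ((c * conjc c - d * conjc d) * (u * conjc u - 1)).
    by rewrite /A /B /C; ring.
  by rewrite hu' subrr mulr0.
have F0 : B + A * conjc t2 + C * t2 = 0.
  rewrite -F //.
  have -> : a + c * t2 = - t1 * (b + d * t2).
    apply/eqP; rewrite -subr_eq0; apply/eqP; rewrite -h0 /ev11; ring.
  by rewrite nrM nrN h1 mul1r subrr.
pose w := C * t2.
have hA : A * conjc t2 = conjc w.
  by rewrite /w /A /C !rmorphM !rmorphB !rmorphM /= !conjcK; ring.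
have t2c : t2 * conjc t2 = 1 by rewrite -nrC h2.
have hB : B = - conjc w - w.
  rewrite -[B]subr0 -F0.
  transitivity (- (A * conjc t2) - w); first by rewrite /w; ring.
  by rewrite hA.
have wreal : conjc w = w.
  have Fv : forall v, nr v = 1 -> (nr (a + c * (t2 * v)) - nr (b + d * (t2 * v)))%:C
        = conjc w * (conjc v - 1) + w * (v - 1).
    move=> v hv; rewrite F; last by rewrite nrM h2 hv mulr1.
    have cv : conjc (t2 * v) = conjc t2 * conjc v by rewrite rmorphM.
    rewrite hB cv.
    transitivity (- conjc w - w + (A * conjc t2) * conjc v + w * v); first by rewrite /w; ring.
    by rewrite hA; ring.
  have Gv : forall v, nr v = 1 -> 0 <= nr (a + c * (t2 * v)) - nr (b + d * (t2 * v)).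
    by move=> v hv; rewrite subr_ge0; apply: S2; rewrite nrM h2 hv mulr1.
  clear hA hB F0; clearbody w.
  move: Fv Gv; case: w => x y Fv Gv.
  have R1 : forall p q : R, p ^+ 2 + q ^+ 2 = 1 -> 0 <= x * (p - 1) - y * q.
    move=> p q hpq.
    have := Fv (p +i* q) hpq; have := Gv (p +i* q) hpq.
    move: (nr _ - nr _) => D hD /= [] hD' _.
    nra.
  suff -> : y = 0 by rewrite /= oppr0.
  have [hz|hnz] := eqVneq (x ^+ 2 + y ^+ 2) 0; first nra.
  have hpos : 0 < x ^+ 2 + y ^+ 2 by rewrite lt0r hnz /=; nra.
  pose r := Num.sqrt (x ^+ 2 + y ^+ 2).
  have hr : r ^+ 2 = x ^+ 2 + y ^+ 2 by rewrite /r sqr_sqrtr //; nra.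
  have r0 : 0 < r by rewrite /r sqrtr_gt0.
  have := R1 (- x / r) (y / r).
  have -> : (- x / r) ^+ 2 + (y / r) ^+ 2 = 1.
    rewrite !expr_div_n sqrrN -mulrDl -hr divff //; apply/lt0r_neq0; nra.
  move=> /(_ erefl).
  have -> : x * (- x / r - 1) - y * (y / r) = - (x ^+ 2 + y ^+ 2) / r - x.
    by field; apply/lt0r_neq0.
  rewrite -hr.
  have -> : - r ^+ 2 / r = - r by field; apply/lt0r_neq0.
  move=> h; nra.
have hA2 : A = C * t2 ^+ 2.
  transitivity ((A * conjc t2) * t2); first by rewrite -mulrA [conjc t2 * _]mulrC t2c mulr1.
  by rewrite hA wreal /w; ring.
have hB2 : B = - (2%:R * C * t2) by rewrite hB wreal /w; ring.
transitivity (A + B * z + C * z ^+ 2); first by rewrite /A /B /C; ring.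
by rewrite hA2 hB2 /C; ring.
Qed.
End S.

Theorem lemma4p2 (R : rcfType) (a b c d tau1 tau2 lam : R[i]) :
  (* p has no zeros on D^2 *)
  (forall z1 z2 : R[i], inD z1 -> inD z2 -> ev11 a b c d z1 z2 != 0) ->
  (* p and ptilde are coprime in C[z1,z2] *)
  mcoprime (pol11 a b c d) (ptil11 a b c d) ->
  (* p vanishes at tau in T^2 *)
  inT tau1 -> inT tau2 -> ev11 a b c d tau1 tau2 = 0 ->
  lam ^+ 2 = conjc a * c - d * conjc b ->
  let p := ev11 a b c d in
  let theta := fun z1 z2 => ev11 (conjc d) (conjc c) (conjc b) (conjc a) z1 z2 / p z1 z2 in
  let f := fun z1 z2 => lam * (z2 - tau2) / p z1 z2 in
  forall z1 z2 : R[i], inD z1 -> inD z2 -> z1 != 0 ->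
    bshift1 f z1 z2 = f z1 z2 * (- ((b + d * z2) / (a + c * z2)))
    /\ bshift1 theta z1 z2 = f z1 z2 * lam * ((z2 - tau2) / (a + c * z2)).
Proof.
move=> H _ h1 h2 h0 hl p theta f z1 z2 hz1 hz2 z10.
have hp : p z1 z2 != 0 := H z1 z2 hz1 hz2.
have hp0 : a + c * z2 != 0.
  have := H 0 z2; rewrite /inD normr0 ltr01 => /(_ isT hz2).
  have -> : ev11 a b c d 0 z2 = a + c * z2 by rewrite /ev11; ring.
  by [].
have Q := @keyQ R a b c d tau1 tau2 z2 H (@normc_eq1 R _ h1) (@normc_eq1 R _ h2) h0.
move: hp; rewrite /bshift1 /theta /f /p => hp.
have -> : ev11 a b c d 0 z2 = a + c * z2 by rewrite /ev11; ring.
have -> : ev11 (conjc d) (conjc c) (conjc b) (conjc a) 0 z2 = conjc d + conjc b * z2.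
  by rewrite /ev11; ring.
split.
  rewrite /ev11 in hp *; field; rewrite ?hp ?hp0 //.
rewrite (_ : lam * (z2 - tau2) / ev11 a b c d z1 z2 * lam * ((z2 - tau2) / (a + c * z2))
   = lam ^+ 2 * (z2 - tau2) ^+ 2 / (ev11 a b c d z1 z2 * (a + c * z2))); last first.
  by field; rewrite hp hp0.
rewrite hl -Q.
rewrite /ev11 in hp *; field; rewrite ?hp ?hp0 //.
Qed.
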